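(* Let $(\alpha_n)_{n\ge0}$ be complex numbers with $0<|\alpha_n|<1$ for all $n$. For all nonnegative integers $n,r,s$, \[ \sum_{p\in\mathrm{Sch}_{n,r,s}}\mathrm{wt}_S(p)=\sum_{q\in\mathfrak{L}_{n,r,s}}\mathrm{wt}_L(q). \]
   Context: Set $\alpha_{-1}=-1$. A Łukasiewicz path is a lattice path in $\mathbb{Z}\times\mathbb{Z}_{\ge0}$ with steps $(1,k)$, $k\le1$ an integer; $\mathfrak{L}_{n,r,s}$ is the set of such paths from $(0,r)$ to $(n,s)$. $\mathrm{wt}_L$ is the product of step weights, where $(a,b)\to(a+1,b+1)$ has weight $1$ and $(a,b)\to(a+1,b-k)$, $k=0,\dots,b$, has weight $-\alpha_b\overline{\alpha_{b-k-1}}\prod_{j=b-k}^{b-1}(1-|\alpha_j|^2)$ (empty product $1$). A Schröder path is a lattice path in $\mathbb{Z}\times\mathbb{Z}_{\ge0}$ with steps $(1,1)$, $(1,0)$, $(0,-1)$; $\mathrm{Sch}_{n,r,s}$ is the set of Schröder paths from $(0,r)$ to $(n,s)$ not starting with a step $(0,-1)$. $\mathrm{wt}_S$ is the product of step weights: $(a,b)\to(a+1,b+1)$ weight $1$; $(a,b)\to(a+1,b)$ weight $-\overline{\alpha_{b-1}}/\overline{\alpha_b}$; $(a,b)\to(a,b-1)$ weight $\frac{\overline{\alpha_{b-2}}}{\overline{\alpha_{b-1}}}(1-|\alpha_{b-1}|^2)$. *)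

(* Defs.v *)
From mathcomp Require Import all_boot all_order all_algebra.
Set Implicit Arguments.
Unset Strict Implicit.
Unset Printing Implicit Defensive.
Import Order.TTheory GRing.Theory Num.Theory.
Local Open Scope ring_scope.

(* Complex numbers: an arbitrary numClosedFieldType C (e.g. C = R[i] for a
   real closed / real field R); conjugation is Num.conj (postfix ^star), modulus `|x|. *)

Section Paths.
Variable C : numClosedFieldType.
Variable alpha : nat -> C.

(* am1 m = alpha_{m-1}, with the convention alpha_{-1} = -1. *)
Definition am1 (m : nat) : C := if m is m'.+1 then alpha m' else -1.

(* ---------------- Lukasiewicz paths ----------------
   A path from (0,r) to (n,s) with steps (1,k), k <= 1, in Z x Z_{>=0}
   is encoded by the sequence of heights h_1,...,h_n after each step
   (h_0 = r).  Heights along such a path never exceed r + n, so the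
   heights are taken in 'I_(r+n).+1 and the encoding is a bijection. *)

Definition luk_step_wt (b c : nat) : C :=
  if c == b.+1 then 1
  else - alpha b * (am1 c)^* * \prod_(c <= j < b) (1 - `|alpha j| ^+ 2).

Fixpoint luk_valid (b : nat) (hs : seq nat) : bool :=
  if hs is c :: hs' then (c <= b.+1)%N && luk_valid c hs' else true.

Fixpoint luk_wt (b : nat) (hs : seq nat) : C :=
  if hs is c :: hs' then luk_step_wt b c * luk_wt c hs' else 1.

Definition luk_path (n r s : nat) (t : n.-tuple 'I_(r + n).+1) : bool :=
  luk_valid r (map val t) && (last r (map val t) == s).

Definition luk_sum (n r s : nat) : C :=
  \sum_(t : n.-tuple 'I_(r + n).+1 | @luk_path n r s t) luk_wt r (map val t).

(* ---------------- Schroeder paths ----------------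
   Steps coded in 'I_3 :  0 = (1,1) up,  1 = (1,0) flat,  2 = (0,-1) down.
   A path from (0,r) to (n,s) is a finite word of steps; it has exactly n
   non-down steps, at most n up steps, hence at most r + n down steps, so
   its length is at most r + 2n.  Paths are enumerated by their length
   m <= r + 2n and their word in m.-tuple 'I_3. *)

Fixpoint sch_end (b : nat) (w : seq 'I_3) : option nat :=
  if w is x :: w' then
    match val x with
    | 0 => sch_end b.+1 w'
    | 1 => sch_end b w'
    | _ => if b is b'.+1 then sch_end b' w' else None
    end
  else Some b.

Definition sch_xlen (w : seq 'I_3) : nat := count (fun x : 'I_3 => val x != 2%N) w.

Definition sch_step_wt (x : 'I_3) (b : nat) : C :=
  match val x with
  | 0 => 1
  | 1 => - (am1 b)^* / (alpha b)^*
  | _ => (am1 b.-1)^* / (am1 b)^* * (1 - `|am1 b| ^+ 2)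
  end.

Fixpoint sch_wt (b : nat) (w : seq 'I_3) : C :=
  if w is x :: w' then
    sch_step_wt x b *
    sch_wt (match val x with 0 => b.+1 | 1 => b | _ => b.-1 end) w'
  else 1.

Definition sch_path (n r s : nat) (w : seq 'I_3) : bool :=
  [&& sch_end r w == Some s, sch_xlen w == n & val (head ord0 w) != 2%N].

Definition sch_sum (n r s : nat) : C :=
  \sum_(m < (r + n + n).+1)
    \sum_(t : m.-tuple 'I_3 | sch_path n r s t) sch_wt r t.

End Paths.

(* Main.v *)
Require Import Defs.
From mathcomp Require Import all_boot all_order all_algebra.
From mathcomp Require Import ring lra zify.
Import Order.TTheory GRing.Theory Num.Theory.
Local Open Scope ring_scope.

Section Aux.
Variable R : nmodType.

Lemma big_tuple0 (T : finType) (P : pred (seq T)) (F : seq T -> R) :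
  \sum_(t : 0.-tuple T | P t) F t = if P [::] then F [::] else 0.
Proof.
have E : forall t : 0.-tuple T, t = [tuple] by move=> t; apply: tuple0.
case: ifP => HP.
  rewrite (big_pred1 [tuple]) //= => t; rewrite (E t) HP; exact/esym/eqP.
by rewrite big_pred0 // => t; rewrite (E t).
Qed.

Lemma big_tuple_cons (T : finType) m (P : pred (seq T)) (F : seq T -> R) :
  \sum_(t : m.+1.-tuple T | P t) F t =
  \sum_(x : T) \sum_(t : m.-tuple T | P (x :: t)) F (x :: t).
Proof.
rewrite pair_big_dep /=.
rewrite (reindex (fun p : T * m.-tuple T => [tuple of p.1 :: p.2])) //=.
exists (fun t : m.+1.-tuple T => (thead t, [tuple of behead t])).
  by move=> [x t] _ /=; rewrite theadE; congr pair; apply: val_inj.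
by move=> t _; apply: val_inj => /=; rewrite [in RHS](tuple_eta t).
Qed.
End Aux.
Arguments big_tuple0 {R T}. Arguments big_tuple_cons {R T m}.

Section Main.
Variable C : numClosedFieldType.
Variable alpha : nat -> C.
Variable s : nat.

Fixpoint L (n b : nat) : C :=
  if n is n'.+1 then \sum_(c < b.+2) luk_step_wt alpha b c * L n' c
  else (b == s)%:R.

Lemma lsum_eq N n : forall b, (b + n < N)%N ->
  \sum_(t : n.-tuple 'I_N | luk_valid b (map val t) && (last b (map val t) == s))
     luk_wt alpha b (map val t) = L n b.
Proof.
elim: n => [|n IH] b Hb.
  rewrite (big_tuple0 (fun w : seq 'I_N => luk_valid b (map val w) && (last b (map val w) == s))
            (fun w : seq 'I_N => luk_wt alpha b (map val w))) /=.
  by case: eqP.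
rewrite (big_tuple_cons (fun w : seq 'I_N => luk_valid b (map val w) && (last b (map val w) == s))
            (fun w : seq 'I_N => luk_wt alpha b (map val w))) /=.
rewrite (bigID (fun x : 'I_N => x <= b.+1)%N) /=.
rewrite [X in _ + X]big1 ?addr0; last first.
  by move=> x /negbTE Hx; rewrite big_pred0 // => t; rewrite Hx.
rewrite (big_ord_widen_cond N (fun _ => true) (fun c => luk_step_wt alpha b c * L n c)); last by lia.
apply: eq_big => [x|x Hx] //.
rewrite -big_distrr /= -(IH x); last by move: Hx; lia.
congr (_ * _); apply: eq_bigl => t; by rewrite Hx.
Qed.

Definition WS M (P : pred (seq 'I_3)) (F : seq 'I_3 -> C) : C :=
  \sum_(m < M) \sum_(t : m.-tuple 'I_3 | P t) F t.

Lemma WS_S M P F : WS M.+1 P F = (if P [::] then F [::] else 0) +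
  \sum_(x : 'I_3) WS M (fun w => P (x :: w)) (fun w => F (x :: w)).
Proof.
rewrite /WS big_ord_recl big_tuple0; congr (_ + _).
rewrite exchange_big /=; apply: eq_bigr => m _.
by rewrite big_tuple_cons.
Qed.

Lemma WS_ext M (P P' : pred (seq 'I_3)) (F F' : seq 'I_3 -> C) : (forall w, P w = P' w) -> (forall w, P w -> F w = F' w) ->
  WS M P F = WS M P' F'.
Proof.
move=> HP HF; apply: eq_bigr => m _; apply: eq_big => t; [exact: HP | exact: HF].
Qed.

Lemma WS_scale M (P : pred (seq 'I_3)) (F : seq 'I_3 -> C) k : WS M P (fun w => k * F w) = k * WS M P F.
Proof. rewrite /WS big_distrr; apply: eq_bigr => m _; by rewrite big_distrr. Qed.

Lemma WS_0 M (P : pred (seq 'I_3)) (F : seq 'I_3 -> C) : (forall w, P w = false) -> WS M P F = 0.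
Proof. move=> HP; apply: big1 => m _; by apply: big_pred0 => t; rewrite HP. Qed.

Definition Ps M n b := WS M (fun w => sch_path n b s w) (sch_wt alpha b).
Definition Qs M n b := WS M (fun w => (sch_end b w == Some s) && (sch_xlen w == n))
   (sch_wt alpha b).

Definition fw b : C := - (am1 alpha b)^* / (alpha b)^*.
Definition dw b : C := (am1 alpha b.-1)^* / (am1 alpha b)^* * (1 - `|am1 alpha b| ^+ 2).

Lemma PsS M n b : Ps M.+1 n b =
  if n is k.+1 then Qs M k b.+1 + fw b * Qs M k b else (b == s)%:R.
Proof.
rewrite /Ps WS_S !big_ord_recl big_ord0 addr0 /=.
rewrite [X in _ + (_ + (_ + X))]WS_0 ?addr0; last first.
  by move=> w; rewrite /sch_path /= !andbF.
case: n => [|k].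
  rewrite !WS_0; try (by move=> w; rewrite /sch_path /= !andbF).
  rewrite !addr0.
  rewrite /sch_path /= andbT.
  have -> : (Some b == Some s) = (b == s) by apply/eqP/eqP => [[]|->].
  by case: (b == s).
rewrite (_ : sch_path k.+1 b s [::] = false) ?add0r; last by rewrite /sch_path /= !andbF.
rewrite /Qs -WS_scale; congr (_ + _); apply: WS_ext => w;
  rewrite /sch_path /= ?eqSS ?andbT //.
by rewrite /sch_step_wt /= mul1r.
Qed.

Lemma QsS M n b : Qs M.+1 n b = Ps M.+1 n b +
  if b is b'.+1 then dw b * Qs M n b' else 0.
Proof.
rewrite /Qs /Ps !WS_S !big_ord_recl !big_ord0 !addr0 /=.
rewrite [X in _ = _ + (_ + (_ + X)) + _]WS_0 ?addr0; last first.
  by move=> w; rewrite /sch_path /= !andbF.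
rewrite -!addrA; congr (_ + _).
  by rewrite /sch_path /= andbT.
congr (_ + _).
  by apply: WS_ext => w; rewrite /sch_path /= ?andbT.
congr (_ + _).
  by apply: WS_ext => w; rewrite /sch_path /= ?andbT.
case: b => [|b] /=.
  by rewrite WS_0.
by rewrite -WS_scale.
Qed.


Lemma am1_neq0 (halpha : forall k, 0 < `|alpha k| < 1) b : am1 alpha b != 0.
Proof.
case: b => [|b] /=; first by rewrite oppr_eq0 oner_eq0.
by rewrite -normr_gt0; case/andP: (halpha b).
Qed.

Fixpoint D b c := if b is b'.+1 then (if (b'.+1 <= c)%N then 1 else dw b'.+1 * D b' c) else 1.

Lemma D_closed (halpha : forall k, 0 < `|alpha k| < 1) b c : (c <= b)%N ->
  D b c = (am1 alpha c)^* / (am1 alpha b)^* * \prod_(c <= j < b) (1 - `|alpha j| ^+ 2).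
Proof.
have nz : forall k, (am1 alpha k)^* != 0 by move=> k; rewrite conjC_eq0 am1_neq0.
elim: b => [|b IH] Hc.
  have -> : c = 0%N by lia.
  by rewrite big_geq // mulr1 divff.
rewrite /=; case: (leqP b.+1 c) => H.
  have -> : c = b.+1 by lia.
  by rewrite big_geq // mulr1 divff.
rewrite IH; last by lia.
rewrite big_nat_recr /=; last by lia.
rewrite /dw /=.
have := nz b.+1; rewrite /= => nzb.
have := nz b; rewrite /= => nzb'.
field.
by rewrite nzb nzb'.
Qed.

Lemma step_eq (halpha : forall k, 0 < `|alpha k| < 1) b c : (c <= b.+1)%N ->
  D b.+1 c + (if (c <= b)%N then fw b * D b c else 0) = luk_step_wt alpha b c.
Proof.
have nz : forall k, (am1 alpha k)^* != 0 by move=> k; rewrite conjC_eq0 am1_neq0.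
move=> Hc; case: (leqP c b) => H.
  rewrite (D_closed halpha _ _ Hc) (D_closed halpha _ _ H).
  rewrite /luk_step_wt (_ : (c == b.+1) = false); last by apply/eqP; lia.
  rewrite big_nat_recr /=; last by lia.
  rewrite /fw normCK.
  have := nz b.+1; rewrite /= => nzb.
  have := nz b; rewrite /= => nzb'.
  field.
  by rewrite nzb nzb'.
have -> : c = b.+1 by lia.
by rewrite /= leqnn ?ltnn addr0 /luk_step_wt eqxx.
Qed.

Definition Dsum n b := \sum_(c < b.+1) D b c * L n c.

Lemma DsumS n b : Dsum n b.+1 = L n b.+1 + dw b.+1 * Dsum n b.
Proof.
rewrite /Dsum big_ord_recr /= leqnn mul1r addrC; congr (_ + _).
rewrite big_distrr; apply: eq_bigr => i _ /=.
by rewrite ltnNge -ltnS (ltn_ord i) /= mulrA.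
Qed.

Lemma claim (halpha : forall k, 0 < `|alpha k| < 1) M : forall n b, (b + n + n < M)%N ->
  Ps M n b = L n b /\ Qs M n b = Dsum n b.
Proof.
elim: M => [|M IH] n b H; first by lia.
have HP : Ps M.+1 n b = L n b.
  rewrite PsS; case: n H => [|k] H //.
  have [_ ->] := IH k b.+1 ltac:(lia).
  have [_ ->] := IH k b ltac:(lia).
  rewrite /= /Dsum big_distrr /=.
  rewrite [X in _ + X](_ : _ = \sum_(c < b.+2) (if (c < b.+1)%N then fw b * D b c else 0) * L k c); last first.
    rewrite [RHS]big_ord_recr /= ltnn mul0r addr0; apply: eq_bigr => i _.
    by rewrite /= (ltn_ord i) mulrA.
  rewrite -big_split; apply: eq_bigr => i _ /=.
  rewrite -mulrDl; congr (_ * _).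
  rewrite -(step_eq halpha) /=; last by rewrite -ltnS.
  by rewrite ltnS.
split => //.
rewrite QsS HP; case: b H HP => [|b] H HP.
  by rewrite addr0 /Dsum big_ord_recl big_ord0 addr0 /= mul1r.
have [_ ->] := IH n b ltac:(lia).
by rewrite DsumS.
Qed.

End Main.

Theorem proposition3p11 (C : numClosedFieldType) (alpha : nat -> C)
  (halpha : forall k, 0 < `|alpha k| < 1) (n r s : nat) :
  sch_sum alpha n r s = luk_sum alpha n r s.
Proof.
have [HP _] := @claim C alpha s halpha (r + n + n).+1 n r (leqnn _).
have E1 : sch_sum alpha n r s = Ps C alpha s (r + n + n).+1 n r by [].
rewrite E1 HP /luk_sum -(@lsum_eq C alpha s (r + n).+1 n r) //.
Qed.
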